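(* Assume that for every $t$ the local noises $w^1_t,\ldots,w^n_t$ are exchangeable. Then the optimal strategy (minimizing $J(g)$ over all strategies $g$) is characterized by the Bellman equation on the planning space $\mathcal{M}(n)\times\{0,1,2,\ldots\}$: for all $x\in\mathcal{M}(n)$ and $y\in\{0,1,2,\ldots\}$, $$V(x,y)=\min_{a\in\{0,1\}}\Big(\hat c(x,y,a)+\gamma\,\mathbb{E}\big[V(\hat f(x,y,o))\big]\Big),$$ where the expectation is over $o\in\mathcal{O}$ with distribution $$\mathbb{P}(o\mid x,y,a)=(1-aq)\,\mathbb{1}\{o=\mathtt{blank}\}+a\,q\,T_{\mathsf m}^{y+1}(o,x)\,\mathbb{1}\{o\neq\mathtt{blank}\};$$ i.e. the strategy which at every time $t$ selects an action attaining the minimum at $(x_t,y_t)$ is optimal.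
   Context: Setting: $n\in\mathbb{N}$ nodes, finite state set $\mathcal{S}\subset\mathbb{R}$, finite noise set $\mathcal{W}\subset\mathbb{R}$, time $t\in\mathbb{N}=\{1,2,\ldots\}$. Node $i$ has state $s^i_t\in\mathcal{S}$; the empirical distribution is $m_t(s)=\frac1n\sum_{i=1}^n\mathbb{1}\{s^i_t=s\}$, taking values in $\mathcal{M}(n)$, the set of probability vectors on $\mathcal{S}$ whose entries lie in $\{0,\frac1n,\ldots,1\}$. States evolve as $s^i_{t+1}=f(s^i_t,m_t,w^i_t)$ with local noise $w^i_t\in\mathcal{W}$. A decision maker picks $a_t\in\{0,1\}$ ($1$ = collect data). Observations $o_t\in\mathcal{O}=\mathcal{M}(n)\cup\{\mathtt{blank}\}$: $o_1=m_1$; if $a_t=0$ then $o_{t+1}=\mathtt{blank}$; if $a_t=1$ then $o_{t+1}=m_{t+1}$ with probability $q\in[0,1]$ (credible data) and $o_{t+1}=\mathtt{blank}$ with probability $1-q$. A strategy is $g=(g_1,g_2,\ldots)$ with $a_t=g_t(o_{1:t},a_{1:t-1})$. The initial states, noise vectors $(w^1_t,\ldots,w^n_t)$, $t\in\mathbb{N}$, and the Bernoulli($q$) credibility variables are mutually independent with finite variances. The estimate is $\hat m_t=h(\mathbb{P}(m_t\mid o_{1:t},a_{1:t-1}))\in\mathcal{M}(n)$ for a fixed function $h$ from probability distributions on $\mathcal{M}(n)$ to $\mathcal{M}(n)$. Per-step cost $c:\mathcal{M}(n)^2\times\{0,1\}\to\mathbb{R}_{\ge0}$ evaluated at $(m_t,\hat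 m_t,a_t)$; discount $\gamma\in(0,1)$; $J(g)=\mathbb{E}^g[\sum_{t=1}^\infty\gamma^{t-1}c(m_t,\hat m_t,a_t)]$. Under exchangeable noises $m_t$ is a (time-homogeneous) Markov chain with transition matrix $T_{\mathsf m}(m',m)=\mathbb{P}(m_{t+1}=m'\mid m_t=m)$; $T_{\mathsf m}^y$ is its $y$-th power and $T_{\mathsf m}^y(\cdot,x)$ the distribution after $y$ steps from $x$. $x_t$ denotes the last non-blank observation up to time $t$ and $y_t$ the number of blank observations since then, $(x_1,y_1)=(m_1,0)$, with $(x_{t+1},y_{t+1})=\hat f(x_t,y_t,o_{t+1})$ where $\hat f(x,y,o)=(x,y+1)$ if $o=\mathtt{blank}$ and $\hat f(x,y,o)=(o,0)$ otherwise. Define $\hat c(x,y,a)=\sum_{m\in\mathcal{M}(n)}c\big(m,h(T_{\mathsf m}^{y}(\cdot,x)),a\big)\,T_{\mathsf m}^{y}(m,x)$. *)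

(* Defs.v *)
From HB Require Import structures.
From mathcomp Require Import all_boot all_order all_algebra all_fingroup.
From mathcomp Require Import all_classical all_reals.
From mathcomp Require Import topology normedtype sequences.
Set Implicit Arguments. Unset Strict Implicit. Unset Printing Implicit Defensive.
Import Order.TTheory GRing.Theory Num.Theory numFieldNormedType.Exports.
Local Open Scope ring_scope.

(* Empirical distributions M(n).  An element of M(n) is encoded by its *)
(* vector of counts  k : S -> {0..n}  with  \sum_s k s = n ;  the      *)
(* probability vector it stands for is  s |-> k s / n  (see [mval]).   *)
Definition cnt_ok (n : nat) (S : finType) (v : {ffun S -> 'I_n.+1}) : bool :=
  (\sum_(s : S) (v s : nat) == n)%N.

Definition Mn (n : nat) (S : finType) : finType := {v : {ffun S -> 'I_n.+1} | cnt_ok v}.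

Definition mval (R : realType) n (S : finType) (m : Mn n S) (s : S) : R :=
  ((val m s : nat)%:R) / n%:R.

Definition cnt n (S : finType) (st : {ffun 'I_n -> S}) (x : S) : nat :=
  #|[pred i | st i == x]|.

Lemma cnt_lt n (S : finType) (st : {ffun 'I_n -> S}) (x : S) : (cnt st x < n.+1)%N.
Proof. rewrite ltnS /cnt; apply: leq_trans (max_card _) _; by rewrite card_ord. Qed.

Lemma cnt_sum n (S : finType) (st : {ffun 'I_n -> S}) :
  cnt_ok [ffun x => Ordinal (cnt_lt st x)].
Proof.
rewrite /cnt_ok; apply/eqP.
under eq_bigr => x _ do rewrite ffunE /= /cnt -sum1_card.
rewrite (exchange_big_dep xpredT) //=.
rewrite -[n in RHS]card_ord -sum1_card; apply: eq_bigr => i _.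
by rewrite (big_pred1 (st i)) // => x; rewrite /= eq_sym.
Qed.

Definition emp n (S : finType) (st : {ffun 'I_n -> S}) : Mn n S :=
  @exist _ (fun v => cnt_ok v) _ (cnt_sum st).

(* observations: [None] is the blank observation *)
Notation Obs n S := (option (Mn n S)).

Section Model.
Variables (R : realType) (S W : finType) (n : nat).
Variable f : S -> Mn n S -> W -> S.
Variable p0 : {ffun 'I_n -> S} -> R.
Variable pW : {ffun 'I_n -> W} -> R.
Variable q : R.
Variable h : (Mn n S -> R) -> Mn n S.
Variable c : Mn n S -> Mn n S -> bool -> R.     (* per-step cost c(m, mhat, a) *)
Variable gam : R.

Definition step (st : {ffun 'I_n -> S}) (w : {ffun 'I_n -> W}) : {ffun 'I_n -> S} :=
  [ffun i => f (st i) (emp st) (w i)].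

(* A strategy: a_t = g t m_1 [o_2;..;o_t] [a_1;..;a_(t-1)]  (t is 0-based here:
   g k is the paper's g_(k+1)). *)
Definition strategy := nat -> Mn n S -> seq (Obs n S) -> seq bool -> bool.

Definition hist := ({ffun 'I_n -> S} * Mn n S * seq (Obs n S) * seq bool)%type.

(* Joint law at (0-based) time k of (s_k, m_1, o_{2..k+1}, a_{1..k}), as a
   finitely supported distribution given by a weighted list. *)
Fixpoint dist (g : strategy) (k : nat) : seq (R * hist) :=
  match k with
  | 0 => [seq (p0 st, (st, emp st, [::], [::])) | st <- enum {ffun 'I_n -> S}]
  | k'.+1 =>
    flatten [seq
      let: (p, (st, m1, os, acts)) := e in
      let a := g k' m1 os acts in
      flatten [seq
        let st' := step st w in
        if a then
          [:: (p * pW w * q, (st', m1, rcons os (Some (emp st')), rcons acts true));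
              (p * pW w * (1 - q), (st', m1, rcons os None, rcons acts true))]
        else [:: (p * pW w, (st', m1, rcons os None, rcons acts false))]
      | w <- enum {ffun 'I_n -> W}]
    | e <- dist g k']
  end.

(* conditional law P(m_k = . | o_{1:k}, a_{1:k-1}) (0 on null histories) *)
Definition belief (g : strategy) (k : nat) (m1 : Mn n S) (os : seq (Obs n S))
    (acts : seq bool) (m : Mn n S) : R :=
  (\sum_(e <- dist g k | [&& e.2.1.1.2 == m1, e.2.1.2 == os, e.2.2 == acts
                          & emp e.2.1.1.1 == m]) e.1)
  / (\sum_(e <- dist g k | [&& e.2.1.1.2 == m1, e.2.1.2 == os & e.2.2 == acts]) e.1).

Definition exp_cost (g : strategy) (k : nat) : R :=
  \sum_(e <- dist g k)
    let: (p, (st, m1, os, acts)) := e in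
    p * c (emp st) (h (belief g k m1 os acts)) (g k m1 os acts).

Definition J (g : strategy) : R :=
  limn (series (fun k => gam ^+ k * exp_cost g k)).

(* Transition matrix of m_t: T(m', m) = P(m_{t+1} = m' | s_t = st) for any
   state vector st with empirical distribution m (well defined under
   exchangeability). *)
Definition Tm (m' m : Mn n S) : R :=
  if [pick st | emp st == m] is Some st then
    \sum_(w : {ffun 'I_n -> W}) pW w * (emp (step st w) == m')%:R
  else 0.

Fixpoint Tpow (y : nat) (x : Mn n S) : Mn n S -> R :=
  match y with
  | 0 => fun m => (m == x)%:R
  | y'.+1 => fun m' => \sum_(m : Mn n S) Tm m' m * Tpow y' x m
  end.

Definition chat (x : Mn n S) (y : nat) (a : bool) : R :=
  \sum_(m : Mn n S) c m (h (Tpow y x)) a * Tpow y x m.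

Definition fhat (xy : Mn n S * nat) (o : Obs n S) : Mn n S * nat :=
  match o with None => (xy.1, xy.2.+1) | Some m => (m, 0%N) end.

(* (x_t, y_t) computed from o_1 = m_1 and o_{2..t} *)
Definition xy_of (m1 : Mn n S) (os : seq (Obs n S)) : Mn n S * nat :=
  foldl fhat (m1, 0%N) os.

Definition Pobs (x : Mn n S) (y : nat) (a : bool) (o : Obs n S) : R :=
  match o with
  | None => 1 - (a%:R) * q
  | Some m => (a%:R) * q * Tpow y.+1 x m
  end.

Definition Qval (V : Mn n S -> nat -> R) (x : Mn n S) (y : nat) (a : bool) : R :=
  chat x y a +
  gam * (Pobs x y a None * V (fhat (x, y) None).1 (fhat (x, y) None).2
         + \sum_(m : Mn n S) Pobs x y a (Some m)
                              * V (fhat (x, y) (Some m)).1 (fhat (x, y) (Some m)).2).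

Definition bellman (V : Mn n S -> nat -> R) : Prop :=
  forall x y, V x y = Num.min (Qval V x y false) (Qval V x y true).

Definition bounded_V (V : Mn n S -> nat -> R) : Prop :=
  exists B : R, forall x y, `|V x y| <= B.

Definition greedy (V : Mn n S -> nat -> R) (g : strategy) : Prop :=
  forall k m1 os acts, size os = k -> size acts = k ->
    forall a, Qval V (xy_of m1 os).1 (xy_of m1 os).2 (g k m1 os acts)
              <= Qval V (xy_of m1 os).1 (xy_of m1 os).2 a.

End Model.

(* Main.v *)
Require Import Defs.
From HB Require Import structures.
From mathcomp Require Import all_boot all_order all_algebra all_fingroup.
From mathcomp Require Import all_classical all_reals.
From mathcomp Require Import topology normedtype sequences.
Import Order.TTheory GRing.Theory Num.Theory numFieldNormedType.Exports.
Local Open Scope ring_scope.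
From mathcomp Require Import ring lra.

Lemma cnt_count n (S : finType) (st : {ffun 'I_n -> S}) x :
  cnt st x = count_mem x (map st (enum 'I_n)).
Proof. rewrite enumT /cnt cardE /enum_mem size_filter count_map. by apply: eq_count => i. Qed.

Lemma emp_cnt n (S : finType) (st st' : {ffun 'I_n -> S}) :
  emp st = emp st' -> forall x, cnt st x = cnt st' x.
Proof.
move=> /(congr1 val) /= /ffunP E x. by have := congr1 val (E x); rewrite !ffunE.
Qed.

Lemma emp_ext n (S : finType) (st st' : {ffun 'I_n -> S}) :
  (forall x, cnt st x = cnt st' x) -> emp st = emp st'.
Proof.
move=> E; apply: val_inj => /=; apply/ffunP => x; rewrite !ffunE; apply: val_inj; exact: E.
Qed.

Lemma emp_perm n (S : finType) (st : {ffun 'I_n -> S}) (s : 'S_n) :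
  emp [ffun i => st (s i)] = emp st.
Proof.
apply: emp_ext => x; rewrite /cnt -!sum1_card.
rewrite [in RHS](reindex_inj (@perm_inj _ s)) /=.
by apply: eq_bigl => i; rewrite !inE ffunE.
Qed.

Lemma emp_eq_perm n (S : finType) (st st0 : {ffun 'I_n -> S}) :
  emp st0 = emp st -> exists s : 'S_n, forall i, st0 i = st (s i).
Proof.
move=> E.
have : perm_eq (map st0 (enum 'I_n)) (map_tuple st (ord_tuple n)).
  apply/allP => x _ /=; apply/eqP.
  by rewrite -cnt_count -cnt_count; apply: emp_cnt.
case/tuple_permP => s Hs; exists s => i.
have := congr1 (fun l => nth (st0 i) l i) Hs => /=.
rewrite (nth_map i) ?size_enum_ord // nth_ord_enum => ->.
rewrite (nth_map i) ?size_enum_ord // nth_ord_enum.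
by rewrite tnth_map tnth_ord_tuple.
Qed.
Lemma sum_ind (R : realType) (T : finType) (x : T) (G : T -> R) :
  \sum_y (x == y)%:R * G y = G x.
Proof.
rewrite (bigD1 x) //= eqxx mul1r big1 ?addr0 // => y /negbTE.
by rewrite eq_sym => ->; rewrite mul0r.
Qed.

Lemma sum_ind1 (R : realType) (T : finType) (x : T) :
  \sum_y ((x == y)%:R : R) = 1.
Proof.
rewrite -[RHS](@sum_ind R T x (fun _ => 1)).
by apply: eq_bigr => y _; rewrite mulr1.
Qed.

Arguments sum_ind {R T} x G.
Arguments sum_ind1 {R T} x.

Lemma partition_seq (R : realType) (T K : eqType) (s : seq T) (key : T -> K) (F : T -> R) :
  \sum_(e <- s) F e = \sum_(H <- undup (map key s)) \sum_(e <- s | key e == H) F e.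
Proof.
under [RHS]eq_bigr do rewrite big_mkcond.
rewrite exchange_big /=; apply: eq_big_seq => e He.
have Hm : key e \in undup (map key s) by rewrite mem_undup; apply: map_f.
rewrite (bigD1_seq _ Hm (undup_uniq _)) /= eqxx big1 ?addr0 // => H.
by rewrite eq_sym => /negbTE ->.
Qed.
Arguments partition_seq {R T K} s key F.

Section Markov2.
Variables (R : realType) (S W : finType) (n : nat).
Variable f : S -> Mn n S -> W -> S.
Variable pW : {ffun 'I_n -> W} -> R.
Hypothesis pW_ge0 : forall w, 0 <= pW w.
Hypothesis pW_sum1 : \sum_w pW w = 1.
Hypothesis pW_exch : forall (sigma : 'S_n) (w : {ffun 'I_n -> W}),
      pW [ffun i => w (sigma i)] = pW w.

Lemma markov01 st m' :
  \sum_w pW w * (emp (step f st w) == m')%:R = Tm f pW m' (emp st).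
Proof.
rewrite /Tm; case: pickP => [st0 /eqP E|/(_ st)]; last by rewrite eqxx.
have [s Hs] := @emp_eq_perm _ _ _ _ E.
have bij : bijective (fun w : {ffun 'I_n -> W} => [ffun i => w (s i)]).
  exists (fun w : {ffun 'I_n -> W} => [ffun i => w ((s^-1)%g i)]) => w;
    apply/ffunP => i; rewrite !ffunE ?permK ?permKV //.
rewrite [in RHS](reindex _ (onW_bij _ bij)) /=; apply: eq_bigr => w _.
rewrite pW_exch; congr (_ * (_ == _)%:R).
rewrite -[in LHS](@emp_perm _ _ _ s); congr emp; apply/ffunP => i.
by rewrite !ffunE Hs E.
Qed.
Lemma markov (G : Mn n S -> R) st :
  \sum_w pW w * G (emp (step f st w)) = \sum_m' Tm f pW m' (emp st) * G m'.
Proof.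
under [RHS]eq_bigr => m' _ do rewrite -markov01 mulr_suml.
rewrite exchange_big /=; apply: eq_bigr => w _.
rewrite -(sum_ind (emp (step f st w)) G) mulr_sumr; apply: eq_bigr => m' _.
by rewrite mulrA.
Qed.

Lemma Tm_ge0 m' m : 0 <= Tm f pW m' m.
Proof.
rewrite /Tm; case: pickP => [st0 _|_] //.
by apply: sumr_ge0 => w _; apply: mulr_ge0.
Qed.

Lemma sum_Tm m : \sum_m' Tm f pW m' m <= 1.
Proof.
rewrite /Tm; case: pickP => [st0 _|_]; last by rewrite big1.
rewrite exchange_big /= (eq_bigr (fun w => pW w)) ?pW_sum1 // => w _.
by rewrite -mulr_sumr sum_ind1 mulr1.
Qed.

Lemma Tpow_ge0 y x m : 0 <= Tpow f pW y x m.
Proof.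
elim: y m => [|y IH] m /=; first by rewrite ler0n.
by apply: sumr_ge0 => m0 _; apply: mulr_ge0; [apply: Tm_ge0|apply: IH].
Qed.

Lemma sum_Tpow y x : \sum_m Tpow f pW y x m <= 1.
Proof.
elim: y => [|y IH] /=.
  by rewrite (eq_bigr (fun m => (x == m)%:R)) ?sum_ind1 // => m _; rewrite eq_sym.
rewrite exchange_big /=; apply: le_trans IH; apply: ler_sum => m _.
by rewrite -mulr_suml; apply: ler_piMl; [apply: Tpow_ge0|apply: sum_Tm].
Qed.

End Markov2.
Section Dist.
Variables (R : realType) (S W : finType) (n : nat).
Variable f : S -> Mn n S -> W -> S.
Variable p0 : {ffun 'I_n -> S} -> R.
Variable pW : {ffun 'I_n -> W} -> R.
Variable q : R.
Hypothesis pW_ge0 : forall w, 0 <= pW w.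
Hypothesis pW_sum1 : \sum_w pW w = 1.
Hypothesis pW_exch : forall (sigma : 'S_n) (w : {ffun 'I_n -> W}),
      pW [ffun i => w (sigma i)] = pW w.
Hypothesis p0_ge0 : forall st, 0 <= p0 st.
Hypothesis p0_sum1 : \sum_st p0 st = 1.
Hypothesis q_ge0 : 0 <= q.
Hypothesis q_le1 : q <= 1.
Variable g : strategy S n.

Definition KeyT := (Mn n S * seq (Obs n S) * seq bool)%type.
Definition hkey (e : R * hist S n) : KeyT := (e.2.1.1.2, e.2.1.2, e.2.2).
Definition est (e : R * hist S n) := e.2.1.1.1.
Definition gk k (H : KeyT) := g k H.1.1 H.1.2 H.2.
Definition succs k (e : R * hist S n) (w : {ffun 'I_n -> W}) : seq (R * hist S n) :=
  let st' := step f (est e) w in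
  let m1 := e.2.1.1.2 in let os := e.2.1.2 in let acts := e.2.2 in
  if gk k (hkey e) then
    [:: (e.1 * pW w * q, (st', m1, rcons os (Some (emp st')), rcons acts true));
        (e.1 * pW w * (1 - q), (st', m1, rcons os None, rcons acts true))]
  else [:: (e.1 * pW w, (st', m1, rcons os None, rcons acts false))].

Lemma dist_succ k :
  dist f p0 pW q g k.+1 =
  flatten [seq flatten [seq succs k e w | w <- enum {ffun 'I_n -> W}]
          | e <- dist f p0 pW q g k].
Proof.
rewrite /=; congr flatten; apply: eq_map => -[p [[[st m1] os] acts]] /=.
by congr flatten; apply: eq_map => w.
Qed.

Lemma big_dist_succ k (P : pred (R * hist S n)) (F : R * hist S n -> R) :
  \sum_(e <- dist f p0 pW q g k.+1 | P e) F e =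
  \sum_(e <- dist f p0 pW q g k) \sum_w \sum_(e' <- succs k e w | P e') F e'.
Proof.
rewrite dist_succ big_flatten big_map /=; apply: eq_bigr => e _.
by rewrite big_flatten big_map big_enum.
Qed.


Lemma all_flatten (T : Type) (P : pred T) (ss : seq (seq T)) :
  all P (flatten ss) = all (all P) ss.
Proof. by elim: ss => //= s ss IH; rewrite all_cat IH. Qed.

Lemma dist_inv k : all (fun e => [&& 0 <= e.1, size e.2.1.2 == k & size e.2.2 == k])
  (dist f p0 pW q g k).
Proof.
elim: k => [|k IH]; first by rewrite /= all_map; apply/allP => st _ /=; rewrite p0_ge0.
rewrite dist_succ all_flatten all_map; apply/allP => e /(allP IH) /and3P [He Hos Hacts] /=.
rewrite all_flatten all_map; apply/allP => w _ /=.
rewrite /succs; case: ifP => _ /=; rewrite !size_rcons (eqP Hos) (eqP Hacts) !eqxx /= ?andbT.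
  by rewrite !mulr_ge0 // subr_ge0.
by rewrite !mulr_ge0.
Qed.

Lemma succs_mass k e w : \sum_(e' <- succs k e w) e'.1 = e.1 * pW w.
Proof. by rewrite /succs; case: ifP => _; rewrite !big_cons big_nil /=; ring. Qed.

Lemma dist_mass k : \sum_(e <- dist f p0 pW q g k) e.1 = 1.
Proof.
elim: k => [|k IH]; first by rewrite /= big_map -p0_sum1 big_enum.
rewrite big_dist_succ -[RHS]IH; apply: eq_bigr => e _.
under eq_bigr do rewrite succs_mass.
by rewrite -mulr_sumr pW_sum1 mulr1.
Qed.


Definition tot k H := \sum_(e <- dist f p0 pW q g k | hkey e == H) e.1.
Definition Am k H m :=
  \sum_(e <- dist f p0 pW q g k | (hkey e == H) && (emp (est e) == m)) e.1.
Definition TP (H : KeyT) m := Tpow f pW (xy_of H.1.1 H.1.2).2 (xy_of H.1.1 H.1.2).1 m.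
Definition Kf (o : Obs n S) (a : bool) (m' : Mn n S) : R :=
  match o with None => if a then 1 - q else 1
             | Some m0 => (if a then q else 0) * (m' == m0)%:R end.

Lemma regroup k H (G : Mn n S -> R) :
  \sum_(e <- dist f p0 pW q g k | hkey e == H) e.1 * G (emp (est e)) =
  \sum_m Am k H m * G m.
Proof.
under [RHS]eq_bigr => m _ do rewrite /Am big_mkcondr mulr_suml.
rewrite exchange_big /=; apply: eq_bigr => e _.
rewrite (bigD1 (emp (est e))) //= eqxx big1 ?addr0 // => m /negbTE.
by rewrite eq_sym => ->; rewrite mul0r.
Qed.

Lemma rcons_neq0 (T : eqType) (s : seq T) x : (rcons s x == [::]) = false.
Proof. by case: s. Qed.

Lemma hkey_rcons p st m1e ose actse o1 a1 m1 os0 o0 acts0 b :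
  (hkey (p, (st, m1e, rcons ose o1, rcons actse a1)) == (m1, rcons os0 o0, rcons acts0 b))
  = [&& (m1e, ose, actse) == (m1, os0, acts0), o1 == o0 & a1 == b].
Proof.
rewrite /hkey /= !xpair_eqE !eqseq_rcons.
by case: (m1e == m1); case: (ose == os0); case: (o1 == o0); case: (actse == acts0).
Qed.

Lemma succ_filter k e w m1 os0 o0 acts0 b (Psi : Mn n S -> R) :
  \sum_(e' <- succs k e w | hkey e' == (m1, rcons os0 o0, rcons acts0 b))
     e'.1 * Psi (emp (est e')) =
  (hkey e == (m1, os0, acts0))%:R * ((gk k (hkey e) == b)%:R *
    (e.1 * pW w * (Kf o0 (gk k (hkey e)) (emp (step f (est e) w)) *
                   Psi (emp (step f (est e) w))))).
Proof.
rewrite /succs; case: (gk k (hkey e)) => /=; rewrite ?big_cons big_nil !hkey_rcons /=;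
case: (_ == (m1, os0, acts0)); rewrite /= ?mul0r ?addr0 //; 
case: b; case: o0 => [m0|] /=; rewrite ?mul0r ?mul1r ?addr0 ?add0r ?mulr0 ?mulr1 //;
rewrite /est /= ?(inj_eq (@Some_inj _)) ?andbT ?andbF //;
  first (case: ifP => _ /=; rewrite ?mulr0 ?mul0r ?mulr1 //); ring.
Qed.


Lemma next_sum0 k m1 os0 o0 acts0 b (Psi : Mn n S -> R) :
  \sum_(e' <- dist f p0 pW q g k.+1 | hkey e' == (m1, rcons os0 o0, rcons acts0 b))
     e'.1 * Psi (emp (est e')) =
  (gk k (m1, os0, acts0) == b)%:R *
  \sum_(e <- dist f p0 pW q g k | hkey e == (m1, os0, acts0))
     e.1 * \sum_w pW w * (Kf o0 (gk k (m1, os0, acts0)) (emp (step f (est e) w)) *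
                          Psi (emp (step f (est e) w))).
Proof.
rewrite big_dist_succ [in RHS]big_mkcond mulr_sumr; apply: eq_bigr => e _.
under eq_bigr do rewrite succ_filter.
case: eqP => [->|_]; last by rewrite big1 ?mulr0 // => w _; rewrite mul0r.
rewrite !mulr_sumr; apply: eq_bigr => w _; rewrite mul1r; ring.
Qed.

Lemma regroupT k H0 (G : Mn n S -> R) :
  (forall m, Am k H0 m = TP H0 m * tot k H0) ->
  \sum_(e <- dist f p0 pW q g k | hkey e == H0)
     e.1 * (\sum_w pW w * G (emp (step f (est e) w))) =
  tot k H0 * \sum_m' Tpow f pW (xy_of H0.1.1 H0.1.2).2.+1 (xy_of H0.1.1 H0.1.2).1 m' * G m'.
Proof.
move=> IH.
under eq_bigr do rewrite (@markov R S W n f pW pW_exch).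
rewrite (regroup k H0 (fun x => \sum_m' Tm f pW m' x * G m')).
under eq_bigr do rewrite IH.
rewrite /=; move: (tot k H0) => T; under [in RHS]eq_bigr do rewrite mulr_suml.
rewrite [in RHS]exchange_big /= mulr_sumr; apply: eq_bigr => m _.
rewrite !mulr_sumr; apply: eq_bigr => m' _; rewrite /TP; ring.
Qed.

Lemma collapse2 (T : Mn n S -> R) (c : R) m m0 :
  \sum_m' T m' * (c * (m' == m0)%:R * (m' == m)%:R) =
  (m == m0)%:R * \sum_m' T m' * (c * (m' == m0)%:R * 1).
Proof.
rewrite mulr_sumr; apply: eq_bigr => m' _.
case: (eqVneq m' m0) => [->|ne]; last by rewrite !mulr0 !mul0r !mulr0.
by rewrite eq_sym; ring.
Qed.

Lemma collapse1 (T : Mn n S -> R) (c : R) m :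
  \sum_m' T m' * (c * (m' == m)%:R) = c * T m.
Proof.
rewrite -(sum_ind m (fun m' => c * T m')); apply: eq_bigr => m' _.
by rewrite eq_sym; ring.
Qed.

Lemma claimA k H m : Am k H m = TP H m * tot k H.
Proof.
elim: k H m => [|k IH] [[m1 os] acts] m.
  rewrite /Am /tot /= !big_map /TP.
  case: os => [|o os]; last first.
    by rewrite !big_pred0 ?mulr0 // => st; rewrite /hkey /= !xpair_eqE /= ?andbF.
  case: acts => [|a acts]; last first.
    by rewrite !big_pred0 ?mulr0 // => st; rewrite /hkey /= !xpair_eqE /= ?andbF.
  rewrite /=; case: (eqVneq m m1) => [->|ne].
    rewrite ?eqxx mul1r; apply: eq_bigl => st; rewrite /hkey /est /= !xpair_eqE /= !andbT.
    by rewrite andbb.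
  rewrite mul0r big_pred0 // => st; rewrite /hkey /est /= !xpair_eqE /= !andbT.
  by apply/andP => -[/eqP -> /eqP E]; rewrite E eqxx in ne.
case/lastP: os => [|os0 o0].
  rewrite /Am /tot !big_dist_succ big1; last first.
    move=> e _; rewrite big1 // => w _; rewrite /succs; case: ifP => _;
    by rewrite ?big_cons big_nil /hkey /= !xpair_eqE /= ?rcons_neq0 ?andbF.
  rewrite big1 ?mulr0 //.
    move=> e _; rewrite big1 // => w _; rewrite /succs; case: ifP => _;
    by rewrite ?big_cons big_nil /hkey /= !xpair_eqE /= ?rcons_neq0 ?andbF.
case/lastP: acts => [|acts0 b].
  rewrite /Am /tot !big_dist_succ big1; last first.
    move=> e _; rewrite big1 // => w _; rewrite /succs; case: ifP => _;
    by rewrite ?big_cons big_nil /hkey /= !xpair_eqE /= ?rcons_neq0 ?andbF.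
  rewrite big1 ?mulr0 //.
    move=> e _; rewrite big1 // => w _; rewrite /succs; case: ifP => _;
    by rewrite ?big_cons big_nil /hkey /= !xpair_eqE /= ?rcons_neq0 ?andbF.
have EA : Am k.+1 (m1, rcons os0 o0, rcons acts0 b) m =
  \sum_(e' <- dist f p0 pW q g k.+1 | hkey e' == (m1, rcons os0 o0, rcons acts0 b))
     e'.1 * (fun x => (x == m)%:R) (emp (est e')).
  by rewrite /Am big_mkcondr; apply: eq_bigr => e _; case: ifP => _; rewrite ?mulr1 ?mulr0.
have ET : tot k.+1 (m1, rcons os0 o0, rcons acts0 b) =
  \sum_(e' <- dist f p0 pW q g k.+1 | hkey e' == (m1, rcons os0 o0, rcons acts0 b))
     e'.1 * (fun _ => 1) (emp (est e')).
  by apply: eq_bigr => e _; rewrite mulr1.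
rewrite EA ET (next_sum0 k m1 os0 o0 acts0 b (fun x => (x == m)%:R)) (next_sum0 k m1 os0 o0 acts0 b (fun _ => 1)).
have IHk := IH (m1, os0, acts0).
rewrite /TP /xy_of /= foldl_rcons -/(xy_of m1 os0).
move: (gk k (m1, os0, acts0)) => a.
clear EA ET; case: o0 => [m0|].
  rewrite (regroupT k (m1,os0,acts0) (fun x => Kf (Some m0) a x * (x == m)%:R)) //.
  rewrite (regroupT k (m1,os0,acts0) (fun x => Kf (Some m0) a x * 1)) //=.
  rewrite (collapse2 (fun m' => \sum_m2 Tm f pW m' m2 *
           Tpow f pW (xy_of m1 os0).2 (xy_of m1 os0).1 m2)); ring.
rewrite (regroupT k (m1,os0,acts0) (fun x => Kf None a x * (x == m)%:R)) //=.
rewrite (collapse1 (fun m' => \sum_m2 Tm f pW m' m2 *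
           Tpow f pW (xy_of m1 os0).2 (xy_of m1 os0).1 m2)).
have -> : \sum_w pW w * ((if a then 1 - q else 1) * 1) = (if a then 1 - q else 1).
  by rewrite -mulr_suml pW_sum1 mul1r mulr1.
rewrite -mulr_suml -/(tot k (m1, os0, acts0)).
rewrite [RHS]mulrC -!mulrA; by do 3!congr (_ * _).
Qed.


Lemma expect k (G : KeyT -> Mn n S -> R) (K : KeyT -> R) :
  (forall H, tot k H != 0 -> \sum_m TP H m * G H m = K H) ->
  \sum_(e <- dist f p0 pW q g k) e.1 * G (hkey e) (emp (est e)) =
  \sum_(e <- dist f p0 pW q g k) e.1 * K (hkey e).
Proof.
move=> HK.
rewrite (partition_seq _ hkey) [RHS](partition_seq _ hkey); apply: eq_bigr => H _.
rewrite (eq_bigr (fun e => e.1 * G H (emp (est e)))); last by move=> e /eqP ->.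
rewrite [RHS](eq_bigr (fun e => e.1 * K H)); last by move=> e /eqP ->.
rewrite regroup -mulr_suml -/(tot k H).
under eq_bigr do rewrite claimA.
case: (eqVneq (tot k H) 0) => [->|nz]; first by rewrite mul0r big1 // => m _; rewrite mulr0 mul0r.
rewrite -(HK H nz) mulr_sumr; apply: eq_bigr => m _; ring.
Qed.


Definition xye (e : R * hist S n) := xy_of e.2.1.1.2 e.2.1.2.

Lemma belief_TP k m1 os acts :
  tot k (m1, os, acts) != 0 ->
  belief f p0 pW q g k m1 os acts = TP (m1, os, acts).
Proof.
move=> nz; apply: funext => m; rewrite /belief.
have -> : \sum_(e <- dist f p0 pW q g k | [&& e.2.1.1.2 == m1, e.2.1.2 == os,
     e.2.2 == acts & emp e.2.1.1.1 == m]) e.1 = Am k (m1, os, acts) m.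
  by apply: eq_bigl => e; rewrite /hkey /est !xpair_eqE /= -!andbA.
have -> : \sum_(e <- dist f p0 pW q g k | [&& e.2.1.1.2 == m1, e.2.1.2 == os &
     e.2.2 == acts]) e.1 = tot k (m1, os, acts).
  by apply: eq_bigl => e; rewrite /hkey !xpair_eqE /= -!andbA.
by rewrite claimA mulfK.
Qed.

Lemma exp_cost_eq (h : (Mn n S -> R) -> Mn n S) (c : Mn n S -> Mn n S -> bool -> R) k :
  exp_cost f p0 pW q h c g k =
  \sum_(e <- dist f p0 pW q g k) e.1 * chat f pW h c (xye e).1 (xye e).2 (gk k (hkey e)).
Proof.
rewrite /exp_cost.
rewrite (eq_bigr (fun e => e.1 * (fun H m => c m (h (belief f p0 pW q g k H.1.1 H.1.2 H.2)) (gk k H))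
    (hkey e) (emp (est e)))); last by case=> p [[[st m1] os] acts].
rewrite (expect k (fun H m => c m (h (belief f p0 pW q g k H.1.1 H.1.2 H.2)) (gk k H))
  (fun H => chat f pW h c (xy_of H.1.1 H.1.2).1 (xy_of H.1.1 H.1.2).2 (gk k H))) //.
move=> -[[m1 os] acts] nz /=.
by rewrite /chat /TP belief_TP //; apply: eq_bigr => m _; rewrite mulrC.
Qed.

Lemma const_sum (X : R) : X = \sum_w pW w * X.
Proof. by rewrite -mulr_suml pW_sum1 mul1r. Qed.

Lemma EV_succ (V : Mn n S -> nat -> R) k :
  \sum_(e <- dist f p0 pW q g k.+1) e.1 * V (xye e).1 (xye e).2 =
  \sum_(e <- dist f p0 pW q g k) e.1 *
    (Pobs f pW q (xye e).1 (xye e).2 (gk k (hkey e)) None * V (xye e).1 (xye e).2.+1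
     + \sum_m Pobs f pW q (xye e).1 (xye e).2 (gk k (hkey e)) (Some m) * V m 0%N).
Proof.
rewrite big_dist_succ.
have E1 : forall e, \sum_w \sum_(e' <- succs k e w) e'.1 * V (xye e').1 (xye e').2 =
  e.1 * (Pobs f pW q (xye e).1 (xye e).2 (gk k (hkey e)) None * V (xye e).1 (xye e).2.+1)
  + e.1 * ((gk k (hkey e))%:R * q * \sum_m Tm f pW m (emp (est e)) * V m 0%N).
  move=> e; rewrite -(@markov R S W n f pW pW_exch (fun m => V m 0%N)).
  rewrite /succs; case: (gk k (hkey e)) => /=.
    rewrite [X in _ = X + _]const_sum !mulr_sumr -big_split /=; apply: eq_bigr => w _.
    rewrite !big_cons big_nil /xye /xy_of !foldl_rcons /=; ring.
  rewrite mul0r mul0r mulr0 addr0 subr0 mul1r [X in _ = X]const_sum; apply: eq_bigr => w _.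
  rewrite !big_cons big_nil /xye /xy_of !foldl_rcons /=; ring.
under eq_bigr do rewrite E1.
rewrite big_split /=.
under [RHS]eq_bigr do rewrite mulrDr.
rewrite [RHS]big_split /=; congr (_ + _).
rewrite (expect k (fun H m => (gk k H)%:R * q * \sum_m' Tm f pW m' m * V m' 0%N)
   (fun H => \sum_m Pobs f pW q (xy_of H.1.1 H.1.2).1 (xy_of H.1.1 H.1.2).2 (gk k H) (Some m) * V m 0%N)) //.
move=> H _; rewrite /TP /=.
under eq_bigr do rewrite !mulr_sumr.
under [RHS]eq_bigr do rewrite mulr_sumr mulr_suml.
rewrite exchange_big /=; apply: eq_bigr => m' _.
apply: eq_bigr => m _; ring.
Qed.


Variables (h : (Mn n S -> R) -> Mn n S) (c : Mn n S -> Mn n S -> bool -> R) (gam : R).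
Variable V : Mn n S -> nat -> R.

Definition EV k := \sum_(e <- dist f p0 pW q g k) e.1 * V (xye e).1 (xye e).2.

Lemma Qsum k :
  \sum_(e <- dist f p0 pW q g k) e.1 * Qval f pW q h c gam V (xye e).1 (xye e).2 (gk k (hkey e))
  = exp_cost f p0 pW q h c g k + gam * EV k.+1.
Proof.
rewrite /EV EV_succ exp_cost_eq mulr_sumr -big_split /=; apply: eq_bigr => e _.
rewrite /Qval /=; ring.
Qed.

Lemma EV_le k : bellman f pW q h c gam V ->
  EV k <= exp_cost f p0 pW q h c g k + gam * EV k.+1.
Proof.
move=> HB; rewrite -Qsum /EV big_seq [X in _ <= X]big_seq; apply: ler_sum => e He.
have /and3P [He1 _ _] := allP (dist_inv k) e He.
apply: ler_wpM2l => //; rewrite HB ge_min.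
by case: (gk k (hkey e)); rewrite lexx ?orbT.
Qed.

Lemma EV_eq k : bellman f pW q h c gam V -> greedy f pW q h c gam V g ->
  EV k = exp_cost f p0 pW q h c g k + gam * EV k.+1.
Proof.
move=> HB HG; rewrite -Qsum /EV big_seq [X in _ = X]big_seq; apply: eq_bigr => e He.
have /and3P [_ /eqP Hs1 /eqP Hs2] := allP (dist_inv k) e He.
congr (_ * _); rewrite HB; apply: le_anti; apply/andP; split.
  by rewrite ge_min; case: (gk k (hkey e)); rewrite lexx ?orbT.
by rewrite le_min !HG.
Qed.

Lemma iter_le K : bellman f pW q h c gam V -> 0 <= gam ->
  EV 0 <= \sum_(0 <= k < K) gam ^+ k * exp_cost f p0 pW q h c g k + gam ^+ K * EV K.
Proof.
move=> HB g0; elim: K => [|K IH]; first by rewrite big_geq // expr0 mul1r add0r.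
apply: (le_trans IH); rewrite big_nat_recr //= -addrA lerD2l exprS.
rewrite [gam * _]mulrC -mulrA -mulrDr.
by apply: ler_wpM2l; [apply: exprn_ge0|apply: EV_le].
Qed.

Lemma iter_eq K : bellman f pW q h c gam V -> greedy f pW q h c gam V g ->
  EV 0 = \sum_(0 <= k < K) gam ^+ k * exp_cost f p0 pW q h c g k + gam ^+ K * EV K.
Proof.
move=> HB HG; elim: K => [|K IH]; first by rewrite big_geq // expr0 mul1r add0r.
rewrite IH big_nat_recr //= -addrA exprS [gam * _]mulrC -mulrA -mulrDr -EV_eq //.
Qed.

Lemma EV_bound B K : (forall x y, `|V x y| <= B) -> `|EV K| <= B.
Proof.
move=> HV; apply: (le_trans (ler_norm_sum _ _ _)).
rewrite -[B]mul1r -(dist_mass K) mulr_suml big_seq [X in _ <= X]big_seq.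
apply: ler_sum => e He; have /and3P [He1 _ _] := allP (dist_inv K) e He.
by rewrite normrM ger0_norm // ler_wpM2l.
Qed.

End Dist.
Section Lim.
Local Open Scope classical_set_scope.
Lemma small_lim (R : realType) (gam a b C : R) : 0 <= gam -> gam < 1 ->
  (forall k, a <= b + gam ^+ k * C) -> a <= b.
Proof.
move=> g0 g1 Hk.
have Hc : ((fun k => b + gam ^+ k * C) @ \oo --> b).
  rewrite -[X in _ --> X](addr0 b) -[X in _ + X](mul0r C).
  apply: cvgD; first exact: cvg_cst.
  apply: cvgMl; apply: cvg_expr; rewrite ger0_norm //.
rewrite -(cvg_lim _ Hc); last exact: Rhausdorff.
apply: limr_ge; first by apply/cvg_ex; exists b.
by apply: nearW.
Qed.
End Lim.
Lemma le_sum1 (R : realType) (T : finType) (F : T -> R) i :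
  (forall j, 0 <= F j) -> F i <= \sum_j F j.
Proof. by move=> H; rewrite (bigD1 i) //= lerDl sumr_ge0. Qed.

Section VI.
Local Open Scope classical_set_scope.
Variables (R : realType) (S W : finType) (n : nat).
Variable f : S -> Mn n S -> W -> S.
Variable pW : {ffun 'I_n -> W} -> R.
Variable q : R.
Variable h : (Mn n S -> R) -> Mn n S.
Variable c : Mn n S -> Mn n S -> bool -> R.
Variable gam : R.
Hypothesis pW_ge0 : forall w, 0 <= pW w.
Hypothesis pW_sum1 : \sum_w pW w = 1.
Hypothesis q_ge0 : 0 <= q.
Hypothesis q_le1 : q <= 1.
Hypothesis c_ge0 : forall m mh a, 0 <= c m mh a.
Hypothesis gam_gt0 : 0 < gam.
Hypothesis gam_lt1 : gam < 1.

Definition Cmax := \sum_m \sum_mh \sum_a c m mh a.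

Lemma c_le m mh a : c m mh a <= Cmax.
Proof.
apply: (le_trans (@le_sum1 R _ (fun a' => c m mh a') a _)) => [a'|]; first exact: c_ge0.
apply: (le_trans (@le_sum1 R _ (fun mh' => \sum_a' c m mh' a') mh _)) => [mh'|].
  by apply: sumr_ge0.
apply: (@le_sum1 R _ (fun m' => \sum_mh' \sum_a' c m' mh' a') m _) => m'.
by apply: sumr_ge0 => ? _; apply: sumr_ge0.
Qed.

Lemma Cmax_ge0 : 0 <= Cmax.
Proof. by apply: sumr_ge0 => ? _; apply: sumr_ge0 => ? _; apply: sumr_ge0. Qed.

Lemma chat_ge0 x y a : 0 <= chat f pW h c x y a.
Proof.
by apply: sumr_ge0 => m _; apply: mulr_ge0 => //; apply: (@Tpow_ge0 R S W n f pW pW_ge0).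
Qed.

Lemma chat_le x y a : chat f pW h c x y a <= Cmax.
Proof.
apply: (@le_trans _ _ (\sum_m Cmax * Tpow f pW y x m)).
  apply: ler_sum => m _; apply: ler_wpM2r; first exact: (@Tpow_ge0 R S W n f pW pW_ge0).
  exact: c_le.
rewrite -mulr_sumr; apply: ler_piMr; first exact: Cmax_ge0.
exact: (@sum_Tpow R S W n f pW pW_ge0 pW_sum1).
Qed.

Definition wsum x y a :=
  Pobs f pW q x y a None + \sum_m Pobs f pW q x y a (Some m).

Lemma Pobs_ge0 x y a o : 0 <= Pobs f pW q x y a o.
Proof.
case: o => [m|] /=; last by case: a; rewrite ?mul1r ?mul0r ?subr_ge0 ?subr0.
apply: mulr_ge0; [by apply: mulr_ge0|exact: (@Tpow_ge0 R S W n f pW pW_ge0 y.+1 x m)].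
Qed.

Lemma wsum_le x y a : wsum x y a <= 1.
Proof.
rewrite /wsum /Pobs; case: a; rewrite ?mul1r ?mul0r; last first.
  by rewrite big1 ?subr0 ?addr0 // => m _; rewrite mul0r.
rewrite -mulr_sumr; have := @sum_Tpow R S W n f pW pW_ge0 pW_sum1 y.+1 x.
move=> Hs; have : q * \sum_m Tpow f pW y.+1 x m <= q by apply: ler_piMr.
lra.
Qed.

Lemma wsum_ge0 x y a : 0 <= wsum x y a.
Proof. by apply: addr_ge0; [apply: Pobs_ge0|apply: sumr_ge0 => m _; apply: Pobs_ge0]. Qed.

Lemma Qval_mono (U U' : Mn n S -> nat -> R) x y a :
  (forall x y, U x y <= U' x y) ->
  Qval f pW q h c gam U x y a <= Qval f pW q h c gam U' x y a.
Proof.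
move=> HU; rewrite /Qval lerD2l; apply: ler_wpM2l; first exact: ltW.
apply: lerD; first by apply: ler_wpM2l; [apply: Pobs_ge0|apply: HU].
by apply: ler_sum => m _; apply: ler_wpM2l; [apply: Pobs_ge0|apply: HU].
Qed.

Lemma Qval_shift (U : Mn n S -> nat -> R) d x y a :
  Qval f pW q h c gam (fun x y => U x y + d) x y a =
  Qval f pW q h c gam U x y a + gam * d * wsum x y a.
Proof.
rewrite /Qval /wsum; cbv beta.
under eq_bigr do rewrite mulrDr.
rewrite big_split /= -mulr_suml; ring.
Qed.

Definition Bop (U : Mn n S -> nat -> R) x y :=
  Num.min (Qval f pW q h c gam U x y false) (Qval f pW q h c gam U x y true).

Lemma min_mono (a0 a1 b0 b1 : R) : a0 <= b0 -> a1 <= b1 -> Num.min a0 a1 <= Num.min b0 b1.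
Proof.
move=> H0 H1; rewrite le_min; apply/andP; split.
  by rewrite ge_min H0.
by rewrite ge_min H1 orbT.
Qed.

Lemma Bop_mono U U' : (forall x y, U x y <= U' x y) -> forall x y, Bop U x y <= Bop U' x y.
Proof. by move=> HU x y; apply: min_mono; apply: Qval_mono. Qed.

Lemma Bop_shift U U' d : 0 <= d -> (forall x y, U' x y <= U x y + d) ->
  forall x y, Bop U' x y <= Bop U x y + gam * d.
Proof.
move=> d0 HU x y.
have H a : Qval f pW q h c gam U' x y a <= Qval f pW q h c gam U x y a + gam * d.
  apply: (le_trans (Qval_mono U' (fun x y => U x y + d) x y a HU)); rewrite Qval_shift lerD2l.
  apply: ler_piMr; [by apply: mulr_ge0 => //; apply: ltW|apply: wsum_le].
rewrite /Bop [Num.min (Qval _ _ _ _ _ _ U _ _ _) _]minEle; case: ifP => _.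
  by apply: le_trans (H false); rewrite ge_min lexx.
by apply: le_trans (H true); rewrite ge_min lexx orbT.
Qed.


Definition Vk k := iter k Bop (fun _ _ => 0).
Definition Mb := Cmax / (1 - gam).

Lemma Mb_eq : Mb * (1 - gam) = Cmax.
Proof. by rewrite /Mb mulfVK // subr_eq0 eq_sym lt_eqF. Qed.

Lemma Mb_ge0 : 0 <= Mb.
Proof. by rewrite /Mb divr_ge0 ?Cmax_ge0 // subr_ge0 ltW. Qed.

Lemma Qval0 x y a : Qval f pW q h c gam (fun _ _ => 0) x y a = chat f pW h c x y a.
Proof.
rewrite /Qval; cbv beta; rewrite mulr0 add0r.
by rewrite big1 ?mulr0 ?addr0 // => m _; rewrite mulr0.
Qed.

Lemma Vk_step k x y : Vk k x y <= Vk k.+1 x y /\ Vk k.+1 x y <= Vk k x y + gam ^+ k * Cmax.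
Proof.
elim: k x y => [|k IH] x y.
  rewrite /Vk /= /Bop !Qval0 expr0 mul1r add0r; split.
    by rewrite le_min !chat_ge0.
  by rewrite ge_min chat_le.
split; first by apply: Bop_mono => x' y'; case: (IH x' y').
have -> : Vk k.+2 x y = Bop (Vk k.+1) x y by [].
have -> : Vk k.+1 x y = Bop (Vk k) x y by [].
rewrite exprS -mulrA; apply: Bop_shift => [|x' y'].
  by apply: mulr_ge0; [apply: exprn_ge0; apply: ltW|apply: Cmax_ge0].
by case: (IH x' y').
Qed.

Lemma Vk_ge0 k x y : 0 <= Vk k x y.
Proof.
elim: k x y => [|k IH] x y; first by [].
by apply: le_trans (IH x y) _; case: (Vk_step k x y).
Qed.

Lemma Vk_mono x y : {homo (fun k => Vk k x y) : i j / (i <= j)%N >-> i <= j}.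
Proof. by apply/nondecreasing_seqP => k; case: (Vk_step k x y). Qed.

Lemma Vk_up k i x y : Vk (k + i) x y <= Vk k x y + gam ^+ k * Mb - gam ^+ (k + i) * Mb.
Proof.
elim: i => [|i IH]; first by rewrite addn0 addrK.
rewrite addnS; case: (Vk_step (k + i) x y) => _ H1.
apply: (le_trans H1); apply: (le_trans (lerD IH (lexx _))).
rewrite -Mb_eq exprS le_eqVlt; apply/orP; left; apply/eqP; ring.
Qed.

Lemma Vk_le k j x y : Vk j x y <= Vk k x y + gam ^+ k * Mb.
Proof.
have G : 0 <= gam ^+ k * Mb by rewrite mulr_ge0 ?Mb_ge0 // exprn_ge0 // ltW.
case: (leqP k j) => Hkj.
  rewrite -(subnKC Hkj); apply: (le_trans (Vk_up _ _ _ _)).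
  by rewrite lerBlDr lerDl mulr_ge0 ?Mb_ge0 // exprn_ge0 // ltW.
apply: (le_trans (@Vk_mono x y j k (ltnW Hkj))); by rewrite lerDl.
Qed.

Lemma Vk_cvg x y : cvgn (fun k => Vk k x y).
Proof.
apply/cvg_ex; eexists; apply: nondecreasing_cvgn; first exact: Vk_mono.
exists Mb => _ [j _ <-]; have := Vk_le 0 j x y; by rewrite expr0 mul1r add0r.
Qed.

Definition Vlim x y := limn (fun k => Vk k x y).

Lemma Vk_le_Vlim k x y : Vk k x y <= Vlim x y.
Proof. exact: (nondecreasing_cvgn_le (Vk_mono x y) (Vk_cvg x y)). Qed.

Lemma Vlim_le k x y : Vlim x y <= Vk k x y + gam ^+ k * Mb.
Proof. apply: limr_le; first exact: Vk_cvg. by apply: nearW => j; apply: Vk_le. Qed.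

Lemma Vlim_bellman x y : Vlim x y = Bop Vlim x y.
Proof.
apply: le_anti; apply/andP; split.
  apply: limr_le; first exact: Vk_cvg.
  apply: nearW => j; apply: (le_trans (proj1 (Vk_step j x y))).
  by apply: Bop_mono => x' y'; apply: Vk_le_Vlim.
apply: (@small_lim R gam _ _ (gam * Mb) (ltW gam_gt0) gam_lt1) => k.
apply: (le_trans (Bop_shift (Vk k) Vlim (gam ^+ k * Mb) _ _ x y)).
- by rewrite mulr_ge0 ?Mb_ge0 // exprn_ge0 // ltW.
- by move=> x' y'; apply: Vlim_le.
have -> : Bop (Vk k) x y = Vk k.+1 x y by [].
rewrite [gam * (_ * _)]mulrA [gam * _]mulrC -mulrA lerD2r; exact: Vk_le_Vlim.
Qed.

Lemma exists_V : exists V : Mn n S -> nat -> R,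
  bounded_V V /\ bellman f pW q h c gam V.
Proof.
exists Vlim; split; last by move=> x y; apply: Vlim_bellman.
exists Mb => x y; rewrite ger0_norm; last by apply: le_trans (Vk_le_Vlim 0 x y).
by have := Vlim_le 0 x y; rewrite expr0 mul1r add0r.
Qed.

End VI.
Arguments EV {R S W n} f p0 pW q g V k.
Arguments exp_cost_eq {R S W n} f {p0 pW} q pW_sum1 pW_exch g h c k.
Arguments dist_inv {R S W n} f {p0 pW} q pW_ge0 p0_ge0 q_ge0 q_le1 g k.
Arguments dist_mass {R S W n} f {p0 pW} q pW_sum1 p0_sum1 g k.
Arguments chat_ge0 {R S W n f pW h c} pW_ge0 c_ge0 x y a.
Arguments chat_le {R S W n f pW h c} pW_ge0 pW_sum1 c_ge0 x y a.
Arguments Cmax {R S n} c.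
Arguments iter_eq {R S W n} f {p0 pW} q pW_ge0 pW_sum1 pW_exch p0_ge0 q_ge0 q_le1 g h c gam V K _ _.
Arguments iter_le {R S W n} f {p0 pW} q pW_ge0 pW_sum1 pW_exch p0_ge0 q_ge0 q_le1 g h c gam V K _ _.
Arguments EV_bound {R S W n} f {p0 pW} q pW_ge0 pW_sum1 p0_ge0 p0_sum1 q_ge0 q_le1 g V B K _.

Section Main.
Local Open Scope classical_set_scope.
Variables (R : realType) (S W : finType) (n : nat).
Variable f : S -> Mn n S -> W -> S.
Variable p0 : {ffun 'I_n -> S} -> R.
Hypothesis p0_ge0 : forall st, 0 <= p0 st.
Hypothesis p0_sum1 : \sum_st p0 st = 1.
Variable pW : {ffun 'I_n -> W} -> R.
Hypothesis pW_ge0 : forall w, 0 <= pW w.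
Hypothesis pW_sum1 : \sum_w pW w = 1.
Hypothesis pW_exch : forall (sigma : 'S_n) (w : {ffun 'I_n -> W}),
      pW [ffun i => w (sigma i)] = pW w.
Variable q : R.
Hypothesis q_ge0 : 0 <= q.
Hypothesis q_le1 : q <= 1.
Variable h : (Mn n S -> R) -> Mn n S.
Variable c : Mn n S -> Mn n S -> bool -> R.
Hypothesis c_ge0 : forall m mh a, 0 <= c m mh a.
Variable gam : R.
Hypothesis gam_gt0 : 0 < gam.
Hypothesis gam_lt1 : gam < 1.

Definition Sg (g : strategy S n) K := \sum_(0 <= k < K) gam ^+ k * exp_cost f p0 pW q h c g k.

Lemma EC_ge0 g k : 0 <= exp_cost f p0 pW q h c g k.
Proof.
rewrite (exp_cost_eq f q pW_sum1 pW_exch) big_seq; apply: sumr_ge0 => e He.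
have /and3P [He1 _ _] := allP (dist_inv f q pW_ge0 p0_ge0 q_ge0 q_le1 g k) e He.
by apply: mulr_ge0 => //; apply: chat_ge0.
Qed.

Lemma EC_le g k : exp_cost f p0 pW q h c g k <= Cmax c.
Proof.
rewrite (exp_cost_eq f q pW_sum1 pW_exch) -[X in _ <= X]mul1r -(dist_mass f q pW_sum1 p0_sum1 g k).
rewrite mulr_suml big_seq [X in _ <= X]big_seq; apply: ler_sum => e He.
have /and3P [He1 _ _] := allP (dist_inv f q pW_ge0 p0_ge0 q_ge0 q_le1 g k) e He.
by apply: ler_wpM2l => //; apply: chat_le.
Qed.

Lemma Sg_homo g : {homo Sg g : i j / (i <= j)%N >-> i <= j}.
Proof.
apply/nondecreasing_seqP => K; rewrite /Sg big_nat_recr //= lerDl.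
by apply: mulr_ge0; [apply: exprn_ge0; apply: ltW|apply: EC_ge0].
Qed.

Lemma geo K : (\sum_(0 <= k < K) gam ^+ k) * (1 - gam) = 1 - gam ^+ K.
Proof.
elim: K => [|K IH]; first by rewrite big_geq // mul0r expr0 subrr.
by rewrite big_nat_recr //= mulrDl IH exprS; ring.
Qed.

Lemma Sg_cvg g : cvgn (Sg g).
Proof.
apply/cvg_ex; eexists; apply: nondecreasing_cvgn; first exact: Sg_homo.
exists (Cmax c / (1 - gam)) => _ [K _ <-].
have g1 : 0 < 1 - gam by rewrite subr_gt0.
rewrite ler_pdivlMr //.
apply: (@le_trans _ _ (Cmax c * (\sum_(0 <= k < K) gam ^+ k) * (1 - gam))).
  apply: ler_wpM2r; first exact: ltW.
  rewrite mulr_sumr /Sg; apply: ler_sum => k _; rewrite mulrC.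
  by apply: ler_wpM2r; [apply: exprn_ge0; apply: ltW|apply: EC_le].
rewrite -mulrA geo; apply: ler_piMr; first exact: Cmax_ge0.
by rewrite lerBlDr lerDl exprn_ge0 // ltW.
Qed.

Lemma J_Sg g : J f p0 pW q h c gam g = limn (Sg g).
Proof. by []. Qed.

Lemma main_opt (V : Mn n S -> nat -> R) :
  bounded_V V -> bellman f pW q h c gam V ->
  forall gstar : strategy S n, greedy f pW q h c gam V gstar ->
  forall g : strategy S n,
    J f p0 pW q h c gam gstar <= J f p0 pW q h c gam g.
Proof.
move=> [B HB] HBel gstar HG g.
have g0 : 0 <= gam by apply: ltW.
set A := EV f p0 pW q g V 0.
have HA : EV f p0 pW q gstar V 0 = A by [].
apply: (@le_trans _ _ A).
  rewrite J_Sg; apply: limr_le; first exact: Sg_cvg.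
  apply: nearW => j.
  apply: (@small_lim R gam _ _ (gam ^+ j * B) g0 gam_lt1) => i.
  apply: (le_trans (@Sg_homo gstar j (j + i) (leq_addr _ _))).
  have E := iter_eq f q pW_ge0 pW_sum1 pW_exch p0_ge0 q_ge0 q_le1 gstar h c gam V (j + i) HBel HG.
  rewrite HA in E.
  have /andP [HB1 _] : (- B <= EV f p0 pW q gstar V (j + i) <= B).
    by rewrite -ler_norml (EV_bound f q pW_ge0 pW_sum1 p0_ge0 p0_sum1 q_ge0 q_le1).
  have : Sg gstar (j + i) = A - gam ^+ (j + i) * EV f p0 pW q gstar V (j + i).
    by rewrite E /Sg addrK.
  move=> ->; rewrite lerD2l -mulrN exprD mulrA [gam ^+ i * gam ^+ j]mulrC.
  apply: ler_wpM2l; first by rewrite mulr_ge0 // exprn_ge0.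
  by rewrite lerNl.
apply: (@small_lim R gam _ _ B g0 gam_lt1) => K.
apply: (le_trans (iter_le f q pW_ge0 pW_sum1 pW_exch p0_ge0 q_ge0 q_le1 g h c gam V K HBel g0)).
apply: lerD.
  rewrite J_Sg; exact: (nondecreasing_cvgn_le (Sg_homo g) (Sg_cvg g) K).
apply: ler_wpM2l; first exact: exprn_ge0.
have := EV_bound f q pW_ge0 pW_sum1 p0_ge0 p0_sum1 q_ge0 q_le1 g V B K HB.
by rewrite ler_norml => /andP [].
Qed.

End Main.

Theorem theorem3 (R : realType) (S W : finType) (n : nat) (n_gt0 : (0 < n)%N)
  (f : S -> Mn n S -> W -> S)
  (p0 : {ffun 'I_n -> S} -> R)
  (p0_ge0 : forall st, 0 <= p0 st) (p0_sum1 : \sum_st p0 st = 1)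
  (pW : {ffun 'I_n -> W} -> R)
  (pW_ge0 : forall w, 0 <= pW w) (pW_sum1 : \sum_w pW w = 1)
  (pW_exch : forall (sigma : 'S_n) (w : {ffun 'I_n -> W}),
      pW [ffun i => w (sigma i)] = pW w)
  (q : R) (q_ge0 : 0 <= q) (q_le1 : q <= 1)
  (h : (Mn n S -> R) -> Mn n S)
  (c : Mn n S -> Mn n S -> bool -> R) (c_ge0 : forall m mh a, 0 <= c m mh a)
  (gam : R) (gam_gt0 : 0 < gam) (gam_lt1 : gam < 1) :
  (exists V : Mn n S -> nat -> R,
      bounded_V V /\ bellman f pW q h c gam V) /\
  (forall V : Mn n S -> nat -> R,
      bounded_V V -> bellman f pW q h c gam V ->
      forall gstar : strategy S n, greedy f pW q h c gam V gstar ->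
      forall g : strategy S n,
        J f p0 pW q h c gam gstar <= J f p0 pW q h c gam g).
Proof.
split; first exact: (@exists_V R S W n f pW q h c gam pW_ge0 pW_sum1 q_ge0 q_le1 c_ge0 gam_gt0 gam_lt1).
move=> V HV HBel gstar HG g.
by eapply main_opt; eauto.
Qed.
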